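(* Consider the influential bandit problem with $K$ arms, and assume $\max_{i,j}|A_{ij}|\le 1$ and $|\xi^{(t)}|\le1$ for all $t$. Then for every horizon $T\ge K+1$ and every realization of the noise, the Influential LCB algorithm satisfies $$\sum_{t=1}^T l^{(t)}_{i^{(t)}}-\min_{(j_1,\dots,j_T)\in[K]^T}\sum_{t=1}^T l^{(t)}_{j_t}\;\le\;\Big(\tfrac{5K+3}{2}+2\|l^{(1)}\|_\infty\Big)T+\big(2K+2\|l^{(1)}\|_\infty+4\big)\,T\log T,$$ i.e. the regret is $O(KT\log T)$ (natural logarithm).
   Context: Influential bandit problem: there are $K$ arms, an unknown symmetric positive semi-definite interaction matrix $A\in\mathbb{R}^{K\times K}$ and an unknown initial loss vector $l^{(1)}\in\mathbb{R}^K$. At each round $t=1,\dots,T$ the algorithm chooses $i^{(t)}\in[K]$ based on past observations, observes $L^{(t)}=l^{(t)}_{i^{(t)}}+\xi^{(t)}$, and then $l^{(t+1)}_j=l^{(t)}_j+A_{i^{(t)}j}$ for all $j\in[K]$; in the minimum the losses evolve under the same dynamics driven by $j_1,\dots,j_T$. Influential LCB algorithm: initialize $c^{(1)}_i=0$ and $\hat l^{(1)}_i=-\infty$ for all $i\in[K]$. At round $t$, choose $i^{(t)}\in\arg\min_{i\in[K]}(\hat l^{(t)}_i-c^{(t)}_i)$ (any tie-breaking), observe $L^{(t)}$, and set $\hat l^{(t+1)}_{i^{(t)}}=L^{(t)}$, $\hat l^{(t+1)}_i=\hat l^{(t)}_i$ for $i\ne i^{(t)}$; $c^{(t+1)}_{i^{(t)}}=1$,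 $c^{(t+1)}_i=c^{(t)}_i+1$ for $i\ne i^{(t)}$. *)

(* Defs.v *)
From HB Require Import structures.
From mathcomp Require Import all_boot all_order all_algebra.
From mathcomp Require Import all_classical all_reals all_analysis.
Set Implicit Arguments. Unset Strict Implicit. Unset Printing Implicit Defensive.
Import Order.TTheory GRing.Theory Num.Theory.
Local Open Scope ring_scope.

(* Rounds are 0-indexed: round t (0 <= t) of the Rocq development is round
   t+1 of the paper. *)

Fixpoint loss (R : realType) (K : nat) (A : 'M[R]_K) (l1 : 'I_K -> R)
  (s : nat -> 'I_K) (t : nat) : 'I_K -> R :=
  match t with
  | 0 => l1
  | t'.+1 => fun j => loss A l1 s t' j + A (s t') j
  end.

Definition obs (R : realType) (K : nat) (A : 'M[R]_K) (l1 : 'I_K -> R)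
  (xi : nat -> R) (s : nat -> 'I_K) (t : nat) : R :=
  loss A l1 s t (s t) + xi t.

Fixpoint lcb_state (R : realType) (K : nat) (A : 'M[R]_K) (l1 : 'I_K -> R)
  (xi : nat -> R) (s : nat -> 'I_K) (t : nat) : ('I_K -> \bar R) * ('I_K -> nat) :=
  match t with
  | 0 => (fun _ => -oo%E, fun _ => 0%N)
  | t'.+1 =>
      let st := lcb_state A l1 xi s t' in
      (fun i => if i == s t' then (obs A l1 xi s t')%:E else st.1 i,
       fun i => if i == s t' then 1%N else (st.2 i).+1)
  end.

Definition lcb_index (R : realType) (K : nat) (A : 'M[R]_K) (l1 : 'I_K -> R)
  (xi : nat -> R) (s : nat -> 'I_K) (t : nat) (i : 'I_K) : \bar R :=
  ((lcb_state A l1 xi s t).1 i - ((lcb_state A l1 xi s t).2 i)%:R%:E)%E.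

(* s is a run of Influential LCB (with some tie-breaking) for the first T
   rounds: at each round the chosen arm minimizes the index. *)
Definition is_lcb_run (R : realType) (K : nat) (A : 'M[R]_K) (l1 : 'I_K -> R)
  (xi : nat -> R) (s : nat -> 'I_K) (T : nat) : Prop :=
  forall t, (t < T)%N -> forall i : 'I_K,
    (lcb_index A l1 xi s t (s t) <= lcb_index A l1 xi s t i)%E.

Definition cum_loss (R : realType) (K : nat) (A : 'M[R]_K) (l1 : 'I_K -> R)
  (s : nat -> 'I_K) (T : nat) : R :=
  \sum_(t < T) loss A l1 s t (s t).

Definition linf (R : realType) (K : nat) (v : 'I_K -> R) : R :=
  \big[Num.max/0]_(i < K) `|v i|.

(* Main.v *)
Require Import Defs.
From HB Require Import structures.
From mathcomp Require Import all_boot all_order all_algebra.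
From mathcomp Require Import all_classical all_reals all_analysis.
From mathcomp Require Import ring lra.
Set Implicit Arguments. Unset Strict Implicit. Unset Printing Implicit Defensive.
Import Order.TTheory GRing.Theory Num.Theory.
Local Open Scope ring_scope.

Lemma ln_le_sub1 (R : realType) (y : R) : 0 < y -> ln y <= y - 1.
Proof.
move=> y0; have := expR_ge1Dx (ln y); rewrite lnK //; lra.
Qed.

Lemma ln_gap (R : realType) (c u : nat) : (c <= u)%N ->
  c%:R / u.+1%:R <= ln (u.+1%:R : R) - ln ((u - c).+1%:R).
Proof.
move=> cu.
have h1 : (0 : R) < u.+1%:R by rewrite ltr0n.
have h2 : (0 : R) < (u - c).+1%:R by rewrite ltr0n.
have := ln_le_sub1 (divr_gt0 h2 h1).
rewrite ln_div ?posrE //.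
have e : ((u - c).+1 = u.+1 - c)%N by rewrite subSn.
have -> : ((u - c).+1%:R : R) = u.+1%:R - c%:R.
  by rewrite e natrB // leqW.
move=> H.
have E2 : (u.+1%:R - c%:R) / u.+1%:R = 1 - c%:R / (u.+1%:R : R).
  by rewrite mulrBl divff // gt_eqF.
rewrite E2 in H.
have : ln (u.+1%:R - c%:R) = ln ((u-c).+1%:R : R).
  by rewrite e natrB // leqW.
move: H; set a := c%:R / _; set b := ln (_ - _); lra.
Qed.

Lemma linf_ge (R : realType) (K : nat) (v : 'I_K -> R) i : `|v i| <= linf v.
Proof. rewrite /linf. exact: le_bigmax. Qed.

Lemma linf_ge0 (R : realType) (K : nat) (v : 'I_K -> R) : 0 <= linf v.
Proof. rewrite /linf. exact: bigmax_ge_id. Qed.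

Section Main.
Variables (R : realType) (K : nat) (A : 'M[R]_K).

Definition V (s : nat -> 'I_K) (t : nat) (k : 'I_K) : R := \sum_(u < t) A (s u) k.
Definition Phi (s : nat -> 'I_K) (t : nat) : R :=
  \sum_(u < t) \sum_(w < t) A (s u) (s w).

Lemma loss_V l1 s t k : loss A l1 s t k = l1 k + V s t k.
Proof.
elim: t => [|t IH] /=; first by rewrite /V big_ord0 addr0.
by rewrite IH /V big_ord_recr /= addrA.
Qed.

Lemma V0 s k : V s 0 k = 0.
Proof. by rewrite /V big_ord0. Qed.

Lemma VS s t k : V s t.+1 k = V s t k + A (s t) k.
Proof. by rewrite /V big_ord_recr. Qed.

Hypothesis hA1 : forall i j, `|A i j| <= 1.
Hypothesis hsym : A^T = A.

Lemma Asym i j : A i j = A j i.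
Proof. by have := congr1 (fun M : 'M[R]_K => M i j) hsym; rewrite mxE. Qed.

Lemma Ale1 i j : A i j <= 1.
Proof. by have := hA1 i j; rewrite ler_norml => /andP[]. Qed.

Lemma Vdiff s tau d k : `|V s (tau + d) k - V s tau k| <= d%:R.
Proof.
elim: d => [|d IH]; first by rewrite addn0 subrr normr0.
rewrite addnS VS -addrAC.
apply: (le_trans (ler_normD _ _)).
by rewrite -natr1 lerD // hA1.
Qed.

Lemma Vbound s t k : `|V s t k| <= t%:R.
Proof. by have := Vdiff s 0 t k; rewrite V0 subr0 add0n. Qed.

Lemma Phi_S s t : Phi s t.+1 = Phi s t + 2 * V s t (s t) + A (s t) (s t).
Proof.
rewrite /Phi big_ord_recr /=.
rewrite (eq_bigr (fun u : 'I_t => \sum_(w < t) A (s u) (s w) + A (s u) (s t))); last first.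
  by move=> u _; rewrite big_ord_recr.
rewrite big_split /= big_ord_recr /=.
have -> : \sum_(i < t) A (s t) (s i) = V s t (s t).
  by rewrite /V; apply: eq_bigr => i _; rewrite Asym.
rewrite /V; lra.
Qed.

Lemma Phi_sum s T : Phi s T = \sum_(t < T) (2 * V s t (s t) + A (s t) (s t)).
Proof.
elim: T => [|T IH]; first by rewrite /Phi !big_ord0.
by rewrite Phi_S big_ord_recr /= IH addrA.
Qed.

Lemma cum_loss_Phi l1 s T : cum_loss A l1 s T =
  \sum_(t < T) l1 (s t) + (Phi s T - \sum_(t < T) A (s t) (s t)) / 2.
Proof.
rewrite /cum_loss Phi_sum (eq_bigr (fun t : 'I_T => l1 (s t) + V s t (s t))); last first.
  by move=> t _; rewrite loss_V.
rewrite big_split /= big_split /= -mulr_sumr.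
set a := \sum_(i < T) V s i (s i).
set b := \sum_(i < T) A (s i) (s i).
by field.
Qed.

End Main.
Section Bil.
Variables (R : realType) (K : nat) (A : 'M[R]_K).

Definition vecr N (a : 'I_N -> R) (g : 'I_N -> 'I_K) : 'rV[R]_K :=
  \row_k \sum_(p < N) a p * (g p == k)%:R.

Lemma collapse N (a : 'I_N -> R) (g : 'I_N -> 'I_K) (F : 'I_K -> R) :
  \sum_k (\sum_(p < N) a p * (g p == k)%:R) * F k = \sum_(p < N) a p * F (g p).
Proof.
under eq_bigr do rewrite mulr_suml.
rewrite exchange_big /=; apply: eq_bigr => p _.
rewrite (bigD1 (g p)) //= eqxx mulr1 big1 ?addr0 // => k /negbTE.
by rewrite eq_sym => ->; rewrite mulr0 mul0r.
Qed.

Lemma bilin N M (a : 'I_N -> R) g (b : 'I_M -> R) h :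
  (vecr a g *m A *m (vecr b h)^T) 0 0 =
  \sum_(p < N) \sum_(q < M) a p * b q * A (g p) (h q).
Proof.
rewrite mxE.
under eq_bigr => l _ do rewrite !mxE.
under eq_bigr => l _ do under eq_bigr => k _ do rewrite mxE.
under eq_bigr => l _ do rewrite collapse.
under eq_bigr => l _ do rewrite mulrC.
rewrite collapse.
under eq_bigr => q _ do rewrite mulr_sumr.
rewrite exchange_big /=; apply: eq_bigr => p _; apply: eq_bigr => q _.
by rewrite mulrCA mulrA.
Qed.
End Bil.

Section PSD.
Variables (R : realType) (K : nat) (A : 'M[R]_K).
Hypothesis hsym : A^T = A.
Hypothesis hpsd : forall x : 'rV[R]_K, 0 <= (x *m A *m x^T) 0 0.

Lemma entryB (M N : 'M[R]_1) : (M - N) 0 0 = M 0 0 - N 0 0.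
Proof. by rewrite !mxE. Qed.

Lemma Asym' i j : A i j = A j i.
Proof. by have := congr1 (fun M : 'M[R]_K => M i j) hsym; rewrite mxE. Qed.

Lemma psd_sum N (g : 'I_N -> 'I_K) :
  0 <= \sum_(p < N) \sum_(q < N) A (g p) (g q).
Proof.
have := hpsd (vecr (fun _ => 1) g); rewrite bilin.
by under eq_bigr do under eq_bigr do rewrite mulr1 mul1r.
Qed.

Lemma psd_cross N M (a b : R) (g : 'I_N -> 'I_K) (h : 'I_M -> 'I_K) :
  2 * a * b * (\sum_(p < N) \sum_(q < M) A (g p) (h q)) <=
  a ^+ 2 * (\sum_(p < N) \sum_(q < N) A (g p) (g q)) +
  b ^+ 2 * (\sum_(p < M) \sum_(q < M) A (h p) (h q)).
Proof.
set x1 := vecr (fun _ => a) g; set x2 := vecr (fun _ => b) h.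
have := hpsd (x1 - x2).
rewrite linearB /= mulmxBr !mulmxBl !entryB /x1 /x2 !bilin.
have E : \sum_(p < M) \sum_(q < N) b * a * A (h p) (g q) =
         a * b * \sum_(p < N) \sum_(q < M) A (g p) (h q).
  rewrite exchange_big /= mulr_sumr; apply: eq_bigr => p _.
  rewrite mulr_sumr; apply: eq_bigr => q _.
  by rewrite Asym' [b * a]mulrC.
rewrite E.
have F1 : forall (c : R) n m (F : 'I_n -> 'I_m -> R),
    \sum_(p < n) \sum_(q < m) c * F p q = c * \sum_(p < n) \sum_(q < m) F p q.
  move=> c n m F; rewrite mulr_sumr; apply: eq_bigr => p _; by rewrite mulr_sumr.
rewrite (F1 _ _ _ (fun p q => A (g p) (g q))) (F1 _ _ _ (fun p q => A (g p) (h q)))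
  (F1 _ _ _ (fun p q => A (h p) (h q))).
set u := \sum_(p < N) \sum_(q < N) _.
set v := \sum_(p < N) \sum_(q < M) _.
set w := \sum_(p < M) \sum_(q < M) _.
rewrite expr2 expr2. nra.
Qed.
End PSD.

Section Run.
Variables (R : realType) (K : nat) (A : 'M[R]_K) (l1 : 'I_K -> R) (xi : nat -> R)
  (s : nat -> 'I_K).

Notation st t := (lcb_state A l1 xi s t).

Lemma inv t i : ((st t).2 i <= t)%N /\
  (((st t).1 i = -oo%E /\ (st t).2 i = t) \/
   ((st t).1 i = (obs A l1 xi s (t - (st t).2 i))%:E /\ (0 < (st t).2 i)%N
     /\ s (t - (st t).2 i) = i)).
Proof.
elim: t => [|t [IH1 IH2]] /=; first by split=> //; left.
case: eqP => [->|ne].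
  by split=> //; right; rewrite subSS subn0.
split; first by [].
case: IH2 => [[-> ->]|[-> [c0 si]]]; first by left.
by right; rewrite subSS.
Qed.

Hypothesis hA1 : forall i j, `|A i j| <= 1.
Hypothesis hxi : forall t, `|xi t| <= 1.

Lemma per_round T t k : is_lcb_run A l1 xi s T -> (t < T)%N ->
  V A s t (s t) <= V A s t k + 2 * linf l1 + 2 + 2 * ((st t).2 (s t))%:R.
Proof.
move=> hrun tT.
have L0 := linf_ge0 l1.
have hl1 : forall i, `|l1 i| <= linf l1 by move=> i; exact: linf_ge.
have [cs [[hs1 hs2]|[hs1 [hs2 hs3]]]] := inv t (s t).
  rewrite hs2.
  have := Vbound hA1 s t (s t); have := Vbound hA1 s t k.
  rewrite !ler_norml => /andP[? ?] /andP[? ?]; lra.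
have := hrun t tT k; rewrite /lcb_index.
have [ck [[hk1 hk2]|[hk1 [hk2 hk3]]]] := inv t k.
  by rewrite hs1 hk1.
rewrite hs1 hk1 -!EFinB lee_fin /obs hs3 hk3 !loss_V.
set cs' := (st t).2 (s t) in cs hs1 hs2 hs3 *.
set ck' := (st t).2 k in ck hk1 hk2 hk3 *.
have D1 := Vdiff hA1 s (t - cs') cs' (s t).
have D2 := Vdiff hA1 s (t - ck') ck' k.
rewrite subnK // in D1; rewrite subnK // in D2.
move: D1 D2; rewrite !ler_norml => /andP[? ?] /andP[? ?].
have := hl1 (s t); have := hl1 k; rewrite !ler_norml => /andP[? ?] /andP[? ?].
have := hxi (t - cs'); have := hxi (t - ck'); rewrite !ler_norml => /andP[? ?] /andP[? ?].
lra.
Qed.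

Definition cc t : R := ((st t).2 (s t))%:R.
Definition Pot t : R := \sum_(i < K) ln ((t - (st t).2 i).+1%:R).

Lemma Pot_step t : cc t / t.+1%:R <= Pot t.+1 - Pot t.
Proof.
rewrite /Pot.
rewrite [X in _ <= X - _](bigD1 (s t)) //= [X in _ <= _ - X](bigD1 (s t)) //= eqxx.
have -> : \sum_(i < K | i != s t) ln (t.+1 - (if i == s t then 1%N else ((st t).2 i).+1)).+1%:R
       = \sum_(i < K | i != s t) ln ((t - (st t).2 i).+1%:R :> R).
  by apply: eq_bigr => i /negbTE ->; rewrite subSS.
have [hc _] := inv t (s t).
have := ln_gap R hc; rewrite /cc.
set a := \sum_(i < K | i != s t) _.
rewrite subSS subn0; set b := (_ / _); lra.
Qed.

Lemma Pot_sum t : \sum_(u < t) cc u / u.+1%:R <= Pot t.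
Proof.
elim: t => [|t IH]; first by rewrite big_ord0 /Pot big1 // => i _; rewrite /= ln1.
rewrite big_ord_recr /=; have := Pot_step t; move: IH; set a := \sum_(_ < _) _; set b := cc t / _; lra.
Qed.

Lemma Pot_le T : (0 < T)%N -> Pot T <= K%:R * ln T%:R.
Proof.
move=> T0.
have E : \sum_(i < K) ln (T%:R : R) = K%:R * ln T%:R by rewrite sumr_const card_ord mulr_natl.
rewrite /Pot -E; apply: ler_sum => i _.
have [h1 h2] := inv T i.
have c1 : (0 < (st T).2 i)%N by case: h2 => [[_ ->]|[_ []]].
rewrite ler_ln ?posrE ?ltr0n // ler_nat.
by rewrite ltn_subrL c1.
Qed.
End Run.
Lemma step_real (R : realType) (t T P P' V C Ps e B : R) :
  1 <= t -> 1 <= T -> 0 <= Ps -> P' <= P + 2 * V + 1 -> T * V <= C + T * e ->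
  2 * t * T * C <= T ^+ 2 * P + t ^+ 2 * Ps -> P - t ^+ 2 * (Ps / T ^+ 2) <= t * B ->
  P' - (t + 1) ^+ 2 * (Ps / T ^+ 2) <= (t + 1) * B + 2 * e + 1.
Proof.
move=> t1 T1 Ps0 h1 h2 h3 h4.
have T2 : 0 < T ^+ 2 by rewrite exprn_gt0 //; lra.
set q := Ps / T ^+ 2 in h4 *.
have q0 : 0 <= q by rewrite /q divr_ge0 // ltW.
have Psq : Ps = q * T ^+ 2 by rewrite /q mulfVK // gt_eqF.
rewrite Psq in h3.
have h5 : 2 * t * V <= P + t ^+ 2 * q + 2 * t * e.
  rewrite -(ler_pM2l T2).
  have : 2 * t * T * (T * V) <= 2 * t * T * (C + T * e).
    by rewrite ler_pM2l //; apply: mulr_gt0; lra.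
  move: h3; rewrite !expr2. nra.
have h6 : t * P' <= t * (P + 2 * V + 1) by rewrite ler_pM2l //; lra.
have h7 : P <= t * B + t ^+ 2 * q by lra.
have h8 : (t + 1) * P <= (t + 1) * (t * B + t ^+ 2 * q) by rewrite ler_pM2l //; lra.
have h9 : 0 <= t * q by apply: mulr_ge0 => //; lra.
rewrite -(ler_pM2l (_ : 0 < t)); last by lra.
move: h5 h6 h8 h9; rewrite !expr2. nra.
Qed.

Lemma sum_abs_le (R : realType) (T : nat) (f : nat -> R) c :
  (forall t, `|f t| <= c) -> `|\sum_(t < T) f t| <= T%:R * c.
Proof.
move=> h.
have E : \sum_(t < T) c = T%:R * c by rewrite sumr_const card_ord mulr_natl.
rewrite -E; apply: (le_trans (ler_norm_sum _ _ _)).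
by apply: ler_sum => i _; exact: h.
Qed.

Lemma harm (R : realType) m : \sum_(u < m) 1 / (u.+2%:R : R) <= ln (m.+1%:R).
Proof.
elim: m => [|m IH]; first by rewrite big_ord0 ln1.
rewrite big_ord_recr /=.
have := @ln_gap R 1 m.+1 isT; rewrite subSS subn0 /=; move: IH; set a := \sum_(_ < _) _; set b := 1 / _. lra.
Qed.

Theorem theorem4 (R : realType) (K : nat) (A : 'M[R]_K) (l1 : 'I_K -> R)
  (xi : nat -> R) (s : nat -> 'I_K) (T : nat) :
  A^T = A ->
  (forall x : 'rV[R]_K, 0 <= (x *m A *m x^T) 0 0) ->
  (forall i j, `|A i j| <= 1) ->
  (forall t, `|xi t| <= 1) ->
  (K.+1 <= T)%N ->
  is_lcb_run A l1 xi s T ->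
  forall j : nat -> 'I_K,
    cum_loss A l1 s T - cum_loss A l1 j T <=
      ((5 * K%:R + 3) / 2 + 2 * linf l1) * T%:R
      + (2 * K%:R + 2 * linf l1 + 4) * T%:R * ln T%:R.
Proof.
move=> hsym hpsd hA1 hxi hT hrun j.
set L := linf l1.
have L0 : 0 <= L := linf_ge0 l1.
set Ps := Phi A j T.
have Ps0 : 0 <= Ps := @psd_sum R K A hpsd T (fun u => j u).
have T1 : (1 <= T)%N by apply: leq_trans hT.
have T1R : (1 : R) <= T%:R by rewrite ler1n.
set e := fun u => 2 * L + 2 + 2 * cc A l1 xi s u.
have Main : forall n, (n < T)%N ->
  Phi A s n.+1 - n.+1%:R ^+ 2 * (Ps / T%:R ^+ 2) <=
  n.+1%:R * (1 + \sum_(u < n) (2 * e u.+1 + 1) / u.+2%:R).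
  elim=> [|n IH] nT.
    rewrite (Phi_S hsym) /Phi !big_ord0 V0 expr1n !mul1r addr0.
    have := Ale1 hA1 (s 0%N) (s 0%N).
    have : 0 <= Ps / T%:R ^+ 2 by rewrite divr_ge0 // exprn_ge0.
    set q := Ps / _; lra.
  have := IH (ltnW nT).
  have hb : T%:R * V A s n.+1 (s n.+1) <=
            \sum_(u < T) V A s n.+1 (j u) + T%:R * e n.+1.
    have E1 : \sum_(u < T) V A s n.+1 (s n.+1) = T%:R * V A s n.+1 (s n.+1).
      by rewrite sumr_const card_ord mulr_natl.
    have E2 : \sum_(u < T) (V A s n.+1 (j u) + e n.+1) =
              \sum_(u < T) V A s n.+1 (j u) + T%:R * e n.+1.
      by rewrite big_split /= sumr_const card_ord mulr_natl.
    rewrite -E1 -E2; apply: ler_sum => u _.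
    have := @per_round R K A l1 xi s hA1 hxi T n.+1 (j u) hrun nT.
    rewrite /e /cc /L; lra.
  have hc := @psd_cross R K A hsym hpsd n.+1 T T%:R n.+1%:R (fun p => s p) (fun q => j q).
  have hc' : 2 * n.+1%:R * T%:R * \sum_(u < T) V A s n.+1 (j u) <=
             T%:R ^+ 2 * Phi A s n.+1 + n.+1%:R ^+ 2 * Ps.
    rewrite /V exchange_big /=; have -> : 2 * n.+1%:R * T%:R = 2 * T%:R * (n.+1%:R : R) by ring.
    exact: hc.
  have ha : Phi A s n.+2 <= Phi A s n.+1 + 2 * V A s n.+1 (s n.+1) + 1.
    rewrite (Phi_S hsym); have := Ale1 hA1 (s n.+1) (s n.+1); lra.
  move=> IHn.
  have t1 : (1 : R) <= n.+1%:R by rewrite ler1n.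
  have := step_real t1 T1R Ps0 ha hb hc' IHn.
  rewrite natr1.
  have n2 : (0 : R) < n.+2%:R by rewrite ltr0n.
  rewrite big_ord_recr /=.
  rewrite addrA.
  set B := 1 + _.
  have -> : n.+2%:R * (B + (2 * e n.+1 + 1) / n.+2%:R) =
            n.+2%:R * B + 2 * e n.+1 + 1.
    by rewrite mulrDr mulrCA divff ?mulr1 ?addrA // gt_eqF.
  by [].
set m := T.-1.
have mT : m.+1 = T by rewrite /m prednK.
have mlt : (m < T)%N by rewrite -mT ltnSn.
have M := Main m mlt.
rewrite mT in M.
have T0 : (0 : R) < T%:R by lra.
have eq1 : T%:R ^+ 2 * (Ps / T%:R ^+ 2) = Ps by rewrite mulrC divfK // expf_neq0 // gt_eqF.
rewrite eq1 in M.
have Ssplit : \sum_(u < m) (2 * e u.+1 + 1) / u.+2%:R =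
   (4 * L + 5) * \sum_(u < m) 1 / (u.+2%:R : R) + 4 * \sum_(u < m) cc A l1 xi s u.+1 / u.+2%:R.
  rewrite !mulr_sumr -big_split /=; apply: eq_bigr => u _; rewrite /e.
  by field; rewrite -natrD pnatr_eq0.
rewrite Ssplit in M.
have H := harm R m; rewrite mT in H.
have S : \sum_(u < m) cc A l1 xi s u.+1 / u.+2%:R <= K%:R * ln T%:R.
  apply: le_trans (Pot_le A l1 xi s T1).
  rewrite -mT; apply: le_trans (Pot_sum A l1 xi s m.+1).
  by rewrite big_ord_recl /= /cc /= mul0r add0r.
have lnT0 : 0 <= ln (T%:R : R) by rewrite ln_ge0.
rewrite !(cum_loss_Phi hsym).
have a1 := @sum_abs_le R T (fun t => l1 (s t)) (linf l1) (fun t => linf_ge l1 (s t)).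
have a2 := @sum_abs_le R T (fun t => l1 (j t)) (linf l1) (fun t => linf_ge l1 (j t)).
have a3 := @sum_abs_le R T (fun t => A (s t) (s t)) 1 (fun t => hA1 (s t) (s t)).
have a4 := @sum_abs_le R T (fun t => A (j t) (j t)) 1 (fun t => hA1 (j t) (j t)).
move: a1 a2 a3 a4; rewrite !ler_norml => /andP[b1 b2] /andP[b3 b4] /andP[b5 b6] /andP[b7 b8].
rewrite -/L in b1 b2 b3 b4.
set Hs := \sum_(u < m) _ in H M.
set Ss := \sum_(u < m) _ in S M.
have hH' : T%:R * ((4 * L + 5) * Hs) <= T%:R * ((4 * L + 5) * ln T%:R).
  by rewrite ler_pM2l // ler_pM2l //; lra.
have hS' : T%:R * (4 * Ss) <= T%:R * (4 * (K%:R * ln T%:R)).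
  by rewrite ler_pM2l //; lra.
have K0 : (0 : R) <= K%:R by [].
have k1 : (0 : R) <= K%:R * T%:R by apply: mulr_ge0; lra.
have k2 : 0 <= T%:R * ln (T%:R : R) by apply: mulr_ge0; lra.
set lT := ln T%:R in hH' hS' k2 lnT0 *.
set Phs := Phi A s T in M *.
have X1 : Phs - Ps <= T%:R + T%:R * (4 * L + 5) * lT + 4 * T%:R * K%:R * lT by lra.
rewrite -/Ps; lra.
Qed.
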